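(* Let $A$ be a finite dimensional quiver algebra of finite global dimension with $n$ vertices, whose Cartan matrix $\omega_A$ (with respect to a fixed numbering $1,\ldots,n$ of the vertices) is lower triangular, and let $\omega_A=\hat{U}_1 R \hat{U}_2$ be a Bruhat decomposition of $\omega_A$. Then the Coxeter permutation $p_A$ of $A$ coincides with the row-permutation associated to the permutation matrix $R$.
   Context: A quiver algebra is $A=KQ/I$ with $K$ a field, $Q$ a finite connected quiver with vertices $1,\ldots,n$ and $I$ an admissible ideal; $e_i$ are the primitive idempotents of the vertices. The Cartan matrix is the $n\times n$ matrix $\omega_A=(\omega_{ij})$ with $\omega_{ij}=\dim_K e_jAe_i$; for finite global dimension it is invertible over $\mathbb{Z}$, and the Coxeter matrix is $C_A=-\omega_A^T\omega_A^{-1}$. A Bruhat decomposition of an invertible real matrix $M$ is a factorisation $M=U_1PU_2$ with $U_1,U_2$ upper triangular and $P$ a permutation matrix; $P$ is uniquely determined by $M$. For a permutation matrix $P$, the row-permutation $p_r$ is given by $p_r(i)=j$ if the unique non-zero entry of row $i$ of $P$ lies in column $j$, and the column-permutation $p_c$ by $p_c(i)=j$ if the unique non-zero entry of column $i$ lies in row $j$. The Coxeter permutation $p_A$ is the column-permutation of the permutation matrix in a Bruhat decomposition of $C_A$. *)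

(* Defs.v *)
From HB Require Import structures.
From mathcomp Require Import all_boot all_order all_algebra all_fingroup.
From mathcomp Require Import all_classical all_reals.
Set Implicit Arguments. Unset Strict Implicit. Unset Printing Implicit Defensive.
Import Order.TTheory GRing.Theory Num.Theory.
Local Open Scope ring_scope.

(* Upper / lower triangular square matrices (indices 0..n-1 stand for 1..n). *)
Definition upper_triangular (R : nzRingType) (n : nat) (A : 'M[R]_n) : Prop :=
  forall i j : 'I_n, (j < i)%N -> A i j = 0.
Definition lower_triangular (R : nzRingType) (n : nat) (A : 'M[R]_n) : Prop :=
  forall i j : 'I_n, (i < j)%N -> A i j = 0.

Definition bruhat_decomposition (R : nzRingType) (n : nat)
    (M U1 P U2 : 'M[R]_n) : Prop :=
  [/\ upper_triangular U1, upper_triangular U2, is_perm_mx P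
    & M = U1 *m P *m U2].

Definition is_row_permutation (R : nzRingType) (n : nat) (P : 'M[R]_n)
    (p : 'S_n) : Prop :=
  forall i j : 'I_n, (P i j != 0) = (j == p i).
Definition is_column_permutation (R : nzRingType) (n : nat) (P : 'M[R]_n)
    (p : 'S_n) : Prop :=
  forall i j : 'I_n, (P j i != 0) = (j == p i).

(* Cartan matrix of a quiver algebra with n vertices: omega i j = dim e_j A e_i.
   We record the properties that hold for a quiver algebra of finite global
   dimension: non-negative integer entries, positive diagonal (e_i A e_i
   contains e_i), invertible over Z. *)
Definition cartan_like (n : nat) (omega : 'M[int]_n) : Prop :=
  [/\ forall i j, 0 <= omega i j, forall i, 0 < omega i i & omega \in unitmx].

Definition cartan_real (R : realType) (n : nat) (omega : 'M[int]_n) : 'M[R]_n :=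
  map_mx (fun z : int => z%:~R) omega.

Definition coxeter_matrix (R : realType) (n : nat) (omega : 'M[int]_n) : 'M[R]_n :=
  - ((cartan_real R omega)^T *m invmx (cartan_real R omega)).

(* Main.v *)
Require Import Defs.
From HB Require Import structures.
From mathcomp Require Import all_boot all_order all_algebra all_fingroup.
From mathcomp Require Import all_classical all_reals.
From mathcomp Require Import zify.
Import Order.TTheory GRing.Theory Num.Theory.
Local Open Scope ring_scope.
Set Implicit Arguments. Unset Strict Implicit.

Section H.
Variable F : fieldType.

Lemma perm_mxE' n (s : 'S_n) i j : perm_mx s i j = (s i == j)%:R :> F.
Proof. by rewrite /perm_mx !mxE. Qed.

Lemma mul_perm_r n (A : 'M[F]_n) (s : 'S_n) i j : (A *m perm_mx s) i j = A i ((s^-1)%g j).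
Proof.
rewrite !mxE (bigD1 ((s^-1)%g j)) //= perm_mxE' permKV eqxx mulr1 big1 ?addr0 //.
move=> k hk; rewrite perm_mxE'; case: eqP => [e|]; last by rewrite mulr0.
by move: hk; rewrite -e permK eqxx.
Qed.

Lemma mul_perm_l n (A : 'M[F]_n) (s : 'S_n) i j : (perm_mx s *m A) i j = A (s i) j.
Proof.
rewrite !mxE (bigD1 (s i)) //= perm_mxE' eqxx mul1r big1 ?addr0 //.
by move=> k hk; rewrite perm_mxE' eq_sym (negbTE hk) mul0r.
Qed.

Lemma ut_mul n (A B : 'M[F]_n) : upper_triangular A -> upper_triangular B ->
  upper_triangular (A *m B).
Proof.
move=> hA hB i j ji; rewrite mxE big1 // => k _.
case: (ltnP k i) => ki; first by rewrite hA // mul0r.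
by rewrite hB ?mulr0 // (leq_trans ji ki).
Qed.

Lemma ut_diag n (A : 'M[F]_n) : upper_triangular A -> A \in unitmx -> forall i, A i i != 0.
Proof.
move=> hA; rewrite unitmxE -det_tr det_trig; last first.
  by apply/is_trig_mxP => i j ij; rewrite mxE hA.
rewrite unitfE prodf_seq_neq0 => /allP h i.
by have := h i (mem_index_enum i); rewrite mxE.
Qed.

Lemma ut_inv n (A : 'M[F]_n) : upper_triangular A -> A \in unitmx ->
  upper_triangular (invmx A).
Proof.
move=> hA uA i j ji; have hd := ut_diag hA uA.
have hB := mulmxV uA.
suff H : forall k (i : 'I_n), (n - k <= i)%N -> (j < i)%N -> invmx A i j = 0.
  by apply: (H n) => //; rewrite subnn.
elim=> [|k IH] i' hi hj.
  by move: (ltn_ord i') hi; lia.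
have e : (A *m invmx A) i' j = 0.
  by rewrite hB mxE; case: eqP => // e; move: hj; rewrite e ltnn.
move: e; rewrite mxE (bigD1 i') //= big1 ?addr0.
  by move/eqP; rewrite mulf_eq0 (negbTE (hd i')) /= => /eqP.
move=> l hl; case: (ltngtP l i') => li.
- by rewrite hA // mul0r.
- rewrite (IH l) ?mulr0 //; last by apply: ltn_trans li.
  by move: hi li; clear; lia.
- by move: hl; rewrite (val_inj li) eqxx.
Qed.

Lemma perm_uniq n (A B : 'M[F]_n) (p q : 'S_n) : upper_triangular A ->
  (forall i, B i i != 0) -> A *m perm_mx p = perm_mx q *m B -> p = q.
Proof.
move=> hA hB e.
have le j : (nat_of_ord ((q^-1)%g j) <= (p^-1)%g j)%N.
  have := hB j; have := congr1 (fun M : 'M[F]_n => M ((q^-1)%g j) j) e => /=.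
  rewrite mul_perm_r mul_perm_l permKV => <-.
  by rewrite leqNgt; apply: contra => h; rewrite hA.
have s1 : \sum_(j < n) nat_of_ord ((q^-1)%g j) = \sum_(j < n) nat_of_ord ((p^-1)%g j).
  rewrite [LHS](reindex_inj (@perm_inj _ q)) [RHS](reindex_inj (@perm_inj _ p)) /=.
  by apply: eq_bigr => j _; rewrite !permK.
have := leqif_sum (fun j (_ : true) => leqif_eq (le j)).
move=> [_]; rewrite s1 eqxx => /esym /forallP h.
have E j : (q^-1)%g j = (p^-1)%g j by apply/val_inj/eqP/h.
apply/permP => j; apply: (@perm_inj _ (q^-1)%g).
by rewrite permK E permK.
Qed.
End H.

Theorem lemma2p6 (R : realType) (n : nat) (omega : 'M[int]_n)
    (U1 Rm U2 V1 P V2 : 'M[R]_n) (pA r : 'S_n) :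
  cartan_like omega ->
  lower_triangular omega ->
  bruhat_decomposition (cartan_real R omega) U1 Rm U2 ->
  bruhat_decomposition (coxeter_matrix R omega) V1 P V2 ->
  is_column_permutation P pA ->
  is_row_permutation Rm r ->
  pA = r.
Proof.
move=> [_ _ om_u] om_lt [hU1 hU2 /is_perm_mxP [r0 eR] eW] [hV1 hV2 /is_perm_mxP [p0 eP] eC] hcol hrow.
subst Rm P.
set W := cartan_real R omega in eW eC.
have uW : W \in unitmx.
  rewrite unitmxE unitfE /W /cartan_real.
  rewrite (det_map_mx (intr : int -> R)) intr_eq0.
  by apply: contraTneq om_u => h; rewrite unitmxE h unitr0.
have hWT : upper_triangular (- W^T).
  by move=> i j ji; rewrite !mxE om_lt // mulr0z oppr0.
have eq : V1 *m perm_mx p0 *m V2 *m (U1 *m perm_mx r0 *m U2) = - W^T.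
  rewrite -eC -eW /coxeter_matrix -/W mulNmx -mulmxA mulVmx // mulmx1 //.
have uWT : - W^T \in unitmx by rewrite -scaleN1r unitmxZ ?unitrN1 // unitmx_tr.
move: (uWT); rewrite -eq !unitmx_mul => /andP [/andP [/andP [uV1 _] uV2] /andP [/andP [uU1 _] uU2]].
have eq2 : perm_mx p0 *m (V2 *m U1) =
    invmx V1 *m (- W^T) *m invmx U2 *m perm_mx (r0^-1)%g.
  rewrite -eq !mulmxA mulVmx // mul1mx mulmxK //.
  by rewrite -[RHS]mulmxA -perm_mxM mulgV perm_mx1 mulmx1.
have uB : V2 *m U1 \in unitmx by rewrite unitmx_mul uV2 uU1.
have E := perm_uniq (ut_mul (ut_mul (ut_inv hV1 uV1) hWT) (ut_inv hU2 uU2))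
  (ut_diag (ut_mul hV2 hU1) uB) (esym eq2).
apply/permP => i.
have h1 := hrow i (r0 i); rewrite perm_mxE' eqxx oner_neq0 in h1.
have h2 := hcol i ((p0^-1)%g i); rewrite perm_mxE' permKV eqxx oner_neq0 in h2.
by rewrite -(eqP (esym h2)) -(eqP (esym h1)) -E invgK.
Qed.
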